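(* Let $\kappa\neq0$ and let $S=\{(x(s),t,z(s)) : s,t\in\mathbb R\}\subset\mathbb R^3$ be a $\kappa$-cylindrical surface, where $(x,z,\theta)$ solves $x'=\cos\theta$, $z'=\sin\theta$, $\theta'=\kappa z$ on $\mathbb R$. Then $S$ is symmetric with respect to any vertical plane parallel to the rulings (i.e. any plane $\{x=x(s_0)\}$) passing through a point where the height function $z$ attains an extremum (i.e. where $z'(s_0)=0$, equivalently $\cos\theta(s_0)=\pm1$).
   Context: A $\kappa$-cylindrical surface ($\kappa\ne 0$ constant) is a cylindrical ruled surface in $\mathbb R^3$ that locally satisfies the capillary equation $\operatorname{div}\big(Du/\sqrt{1+|Du|^2}\big)=\kappa u$, i.e. its mean curvature equals $\kappa z/2$. Such a surface has horizontal rulings (here parallel to the $y$-axis) and can be written $(x(s),t,z(s))$ where the directrix $\alpha=(x,z)$ is parametrized by arc length, $\theta$ is the angle between $\partial/\partial x$ and $\alpha'$, and $(x,z,\theta)$ satisfies $x'=\cos\theta$, $z'=\sin\theta$, $\theta'=\kappa z$. The height $z$ is measured with respect to the horizontal plane $\Pi=\{z=0\}$. *)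

(* Defs.v *)
From Stdlib Require Import Reals.
Open Scope R_scope.

Definition kappa_cyl_directrix (kappa : R) (x z theta : R -> R) : Prop :=
  forall s : R,
    derivable_pt_lim x s (cos (theta s)) /\
    derivable_pt_lim z s (sin (theta s)) /\
    derivable_pt_lim theta s (kappa * z s).

Definition cyl_surface (x z : R -> R) (p : R * R * R) : Prop :=
  let '(X, Y, Z) := p in exists s t : R, X = x s /\ Y = t /\ Z = z s.

Definition reflect_x (a : R) (p : R * R * R) : R * R * R :=
  let '(X, Y, Z) := p in (2 * a - X, Y, Z).

Definition symmetric_wrt_plane_x (S : R * R * R -> Prop) (a : R) : Prop :=
  forall p, S p <-> S (reflect_x a p).

(* Main.v *)
Require Import Defs.
From Stdlib Require Import Reals Lra Psatz.
Open Scope R_scope.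

Lemma mvt_lim (h h' : R -> R) :
  (forall s, derivable_pt_lim h s (h' s)) -> forall a b, a < b ->
  exists c, h b - h a = h' c * (b - a).
Proof.
  intros H a b Hab.
  pose (pr := (fun s => exist _ (h' s) (H s)) : derivable h).
  destruct (MVT_cor1 h a b pr Hab) as [c [Hc _]].
  exists c. exact Hc.
Qed.

Lemma decr_lim (h h' : R -> R) :
  (forall s, derivable_pt_lim h s (h' s)) -> (forall s, h' s <= 0) ->
  forall a b, a <= b -> h b <= h a.
Proof.
  intros H Hn a b Hab. destruct (Req_dec a b) as [->|Hne]; [lra|].
  destruct (mvt_lim h h' H a b) as [c Hc]; [lra|].
  specialize (Hn c). nra.
Qed.

Lemma sin_lip a b : Rabs (sin a - sin b) <= Rabs (a - b).
Proof.
  assert (H : forall s, derivable_pt_lim sin s (cos s)) by exact derivable_pt_lim_sin.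
  destruct (Rtotal_order a b) as [Hl|[->|Hl]].
  - destruct (mvt_lim sin cos H a b Hl) as [c Hc].
    pose proof (COS_bound c).
    rewrite <- Rabs_Ropp, <- (Rabs_Ropp (a - b)).
    replace (- (sin a - sin b)) with (cos c * (b - a)) by lra.
    replace (- (a - b)) with (b - a) by lra.
    rewrite Rabs_mult, (Rabs_right (b - a)) by lra.
    rewrite <- (Rmult_1_l (b - a)) at 2.
    apply Rmult_le_compat_r; [lra|]. apply Rabs_le; lra.
  - replace (b - b) with 0 by ring. replace (sin b - sin b) with 0 by ring. lra.
  - destruct (mvt_lim sin cos H b a Hl) as [c Hc].
    pose proof (COS_bound c).
    replace (sin a - sin b) with (cos c * (a - b)) by lra.
    rewrite Rabs_mult, (Rabs_right (a - b)) by lra.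
    rewrite <- (Rmult_1_l (a - b)) at 2.
    apply Rmult_le_compat_r; [lra|]. apply Rabs_le; lra.
Qed.

Lemma refl_lim (f : R -> R) (c s l : R) :
  derivable_pt_lim f (2 * c - s) l ->
  derivable_pt_lim (fun u => f (2 * c - u)) s (- l).
Proof.
  intros H.
  assert (Hg : derivable_pt_lim (fun u => 2 * c - u) s (-1)).
  { replace (-1) with (0 - 1) by ring.
    apply (derivable_pt_lim_minus (fun _ => 2 * c) (fun u => u)).
    - apply derivable_pt_lim_const.
    - apply derivable_pt_lim_id. }
  replace (- l) with (l * -1) by ring.
  exact (derivable_pt_lim_comp (fun u => 2 * c - u) f s (-1) l Hg H).
Qed.

Lemma gronwall (f g : R -> R) (L s0 : R) :
  0 <= L ->
  (forall s, derivable_pt_lim f s (g s)) ->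
  (forall s, 0 <= f s) ->
  (forall s, Rabs (g s) <= L * f s) ->
  f s0 = 0 -> forall s, f s = 0.
Proof.
  intros HL Hd Hp Hb H0 s.
  destruct (Rle_dec s0 s) as [Hs|Hs].
  - set (h := fun u => f u * exp (- L * u)).
    set (h' := fun u => g u * exp (- L * u) + f u * (exp (- L * u) * (- L * 1))).
    assert (Hh : forall u, derivable_pt_lim h u (h' u)).
    { intro u. unfold h, h'.
      apply (derivable_pt_lim_mult f (fun u => exp (- L * u))); [apply Hd|].
      apply (derivable_pt_lim_comp (fun u => - L * u) exp).
      - apply (derivable_pt_lim_scal (fun u => u)). apply derivable_pt_lim_id.
      - apply derivable_pt_lim_exp. }
    assert (Hn : forall u, h' u <= 0).
    { intro u. unfold h'. specialize (Hb u). pose proof (exp_pos (- L * u)).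
      pose proof (Rle_abs (g u)). pose proof (Rabs_Ropp (g u)). pose proof (Rle_abs (- g u)). nra. }
    pose proof (decr_lim h h' Hh Hn s0 s Hs) as Hle. unfold h in Hle.
    rewrite H0 in Hle. pose proof (exp_pos (- L * s)). specialize (Hp s). nra.
  - set (h := fun u => - (f u * exp (L * u))).
    set (h' := fun u => - (g u * exp (L * u) + f u * (exp (L * u) * (L * 1)))).
    assert (Hh : forall u, derivable_pt_lim h u (h' u)).
    { intro u. unfold h, h'. apply derivable_pt_lim_opp.
      apply (derivable_pt_lim_mult f (fun u => exp (L * u))); [apply Hd|].
      apply (derivable_pt_lim_comp (fun u => L * u) exp).
      - apply (derivable_pt_lim_scal (fun u => u)). apply derivable_pt_lim_id.
      - apply derivable_pt_lim_exp. }
    assert (Hn : forall u, h' u <= 0).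
    { intro u. unfold h'. specialize (Hb u). pose proof (exp_pos (L * u)).
      pose proof (Rle_abs (g u)). pose proof (Rabs_Ropp (g u)). pose proof (Rle_abs (- g u)). nra. }
    pose proof (decr_lim h h' Hh Hn s s0 ltac:(lra)) as Hle. unfold h in Hle.
    rewrite H0 in Hle. pose proof (exp_pos (L * s)). specialize (Hp s). nra.
Qed.

Theorem mainTheorem2 (kappa : R) (x z theta : R -> R) (s0 : R) :
  kappa <> 0 ->
  kappa_cyl_directrix kappa x z theta ->
  derivable_pt_lim z s0 0 ->
  symmetric_wrt_plane_x (cyl_surface x z) (x s0).
Proof.
  intros Hk Hd Hz0.
  set (t0 := theta s0).
  assert (Hs0 : sin t0 = 0).
  { destruct (Hd s0) as [_ [H _]]. exact (uniqueness_limite z s0 _ _ H Hz0). }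
  assert (Hc2 : cos (2 * t0) = 1).
  { rewrite cos_2a_sin, Hs0. ring. }
  assert (Hs2 : sin (2 * t0) = 0).
  { rewrite sin_2a, Hs0. ring. }
  assert (Hsr : forall a, sin (2 * t0 - a) = - sin a).
  { intro a. rewrite sin_minus, Hc2, Hs2. ring. }
  assert (Hcr : forall a, cos (2 * t0 - a) = cos a).
  { intro a. rewrite cos_minus, Hc2, Hs2. ring. }
  set (Z := fun s => z (2 * s0 - s)).
  set (T := fun s => 2 * t0 - theta (2 * s0 - s)).
  set (E := fun s => (z s - Z s) * (z s - Z s) + (theta s - T s) * (theta s - T s)).
  set (E' := fun s => 2 * (z s - Z s) * (sin (theta s) - sin (T s))
                      + 2 * (theta s - T s) * (kappa * (z s - Z s))).
  assert (HZ : forall s, derivable_pt_lim Z s (sin (T s))).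
  { intro s. unfold Z, T. rewrite Hsr.
    apply (refl_lim z s0 s). apply Hd. }
  assert (HT : forall s, derivable_pt_lim T s (kappa * Z s)).
  { intro s. unfold T, Z.
    replace (kappa * z (2 * s0 - s)) with (0 - - (kappa * z (2 * s0 - s))) by ring.
    apply (derivable_pt_lim_minus (fun _ => 2 * t0) (fun u => theta (2 * s0 - u))).
    - apply derivable_pt_lim_const.
    - apply (refl_lim theta s0 s). apply Hd. }
  assert (HE : forall s, derivable_pt_lim E s (E' s)).
  { intro s. destruct (Hd s) as [_ [Hzs Hts]].
    assert (H1 : derivable_pt_lim (fun u => z u - Z u) s (sin (theta s) - sin (T s)))
      by (apply (derivable_pt_lim_minus z Z); auto).
    assert (H2 : derivable_pt_lim (fun u => theta u - T u) s (kappa * (z s - Z s))).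
    { replace (kappa * (z s - Z s)) with (kappa * z s - kappa * Z s) by ring.
      apply (derivable_pt_lim_minus theta T); auto. }
    unfold E, E'.
    replace (2 * (z s - Z s) * (sin (theta s) - sin (T s)) +
             2 * (theta s - T s) * (kappa * (z s - Z s)))
      with (((sin (theta s) - sin (T s)) * (z s - Z s) + (z s - Z s) * (sin (theta s) - sin (T s)))
            + ((kappa * (z s - Z s)) * (theta s - T s) + (theta s - T s) * (kappa * (z s - Z s))))
      by ring.
    apply (derivable_pt_lim_plus (fun u => (z u - Z u) * (z u - Z u))
                                 (fun u => (theta u - T u) * (theta u - T u)));
      apply (derivable_pt_lim_mult (fun u => _ u - _ u) (fun u => _ u - _ u)); auto. }
  assert (HE0 : forall s, E s = 0).
  { apply (gronwall E E' (1 + Rabs kappa) s0).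
    - pose proof (Rabs_pos kappa); lra.
    - exact HE.
    - intro s. unfold E; cbv beta. set (p := z s - Z s). set (q := theta s - T s). nra.
    - intro s. unfold E, E'.
      pose proof (sin_lip (theta s) (T s)) as Hl.
      set (a := z s - Z s) in *. set (b := theta s - T s) in *.
      set (d := sin (theta s) - sin (T s)) in *.
      assert (Hab : 2 * Rabs a * Rabs b <= a * a + b * b).
      { pose proof (Rsqr_abs a) as Ea. pose proof (Rsqr_abs b) as Eb. unfold Rsqr in *.
        pose proof (Rle_0_sqr (Rabs a - Rabs b)). unfold Rsqr in *.
        rewrite Ea, Eb. lra. }
      eapply Rle_trans; [apply Rabs_triang|].
      rewrite !Rabs_mult. rewrite (Rabs_right 2) by lra.
      pose proof (Rabs_pos a). pose proof (Rabs_pos b). pose proof (Rabs_pos kappa).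
      pose proof (Rabs_pos d).
      nra.
    - unfold E, Z, T. replace (2 * s0 - s0) with s0 by ring. fold t0. ring. }
  assert (HPQ : forall s, z s - Z s = 0 /\ theta s - T s = 0).
  { intro s. specialize (HE0 s). unfold E in HE0.
    pose proof (Rle_0_sqr (z s - Z s)). pose proof (Rle_0_sqr (theta s - T s)).
    unfold Rsqr in *. split; apply Rsqr_0_uniq; unfold Rsqr; lra. }
  assert (Hzz : forall s, z s = z (2 * s0 - s)).
  { intro s. destruct (HPQ s) as [H _]. unfold Z in H. lra. }
  assert (Htt : forall s, theta s = 2 * t0 - theta (2 * s0 - s)).
  { intro s. destruct (HPQ s) as [_ H]. unfold T in H. lra. }
  assert (Hxx : forall s, x s + x (2 * s0 - s) = 2 * x s0).
  { set (F := fun u => x u + x (2 * s0 - u)).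
    assert (HF : forall u, derivable_pt_lim F u 0).
    { intro u. unfold F.
      replace 0 with (cos (theta u) + - cos (theta (2 * s0 - u))).
      - apply (derivable_pt_lim_plus x (fun v => x (2 * s0 - v))).
        + apply Hd.
        + apply refl_lim. apply Hd.
      - rewrite (Htt u), Hcr. ring. }
    assert (HF' : forall u, derivable_pt_lim (fun v => - F v) u 0).
    { intro u. replace 0 with (- 0) by ring. apply derivable_pt_lim_opp. apply HF. }
    assert (Hs0F : F s0 = 2 * x s0).
    { unfold F. replace (2 * s0 - s0) with s0 by ring. ring. }
    intro s. change (F s = 2 * x s0). rewrite <- Hs0F.
    destruct (Rle_dec s0 s).
    - pose proof (decr_lim F (fun _ => 0) HF ltac:(intro; lra) s0 s r).
      pose proof (decr_lim (fun v => - F v) (fun _ => 0) HF' ltac:(intro; lra) s0 s r).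
      lra.
    - pose proof (decr_lim F (fun _ => 0) HF ltac:(intro; lra) s s0 ltac:(lra)).
      pose proof (decr_lim (fun v => - F v) (fun _ => 0) HF' ltac:(intro; lra) s s0 ltac:(lra)).
      lra. }
  intros [[X Y] Zc]. simpl. split.
  - intros [s [t [h1 [h2 h3]]]]. exists (2 * s0 - s), t.
    pose proof (Hxx s). rewrite <- Hzz. repeat split; lra.
  - intros [s [t [h1 [h2 h3]]]]. exists (2 * s0 - s), t.
    pose proof (Hxx s). rewrite <- Hzz. repeat split; lra.
Qed.
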